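(* For all integers $n\ge1$ and $k\ge0$, the generalized cosecant numbers satisfy $$c_{2n+2,k+1}=\frac{(2k+2-2n)(2k+1-2n)}{2n(2n+1)}\,c_{2n,k+1}+\frac{2n}{2n+1}\,c_{2n,k}.$$
   Context: The generalized cosecant numbers $c_{\rho,k}$ are defined as the coefficients of the power series $\left(\frac{x}{\sin x}\right)^{\rho}=\sum_{k\ge0}c_{\rho,k}\,x^{2k}$ (for $|x|<\pi$). *)

(* Defs.v *)
From Stdlib Require Import Reals Lra.
Open Scope R_scope.

(* [is_cosec_coeffs rho c] : the sequence [c] is the coefficient sequence of
   the power series (x / sin x)^rho = sum_{k>=0} c k * x^(2k), valid for
   |x| < PI.  At x = 0 the left side is understood as its limit 1, so we
   require the identity for 0 < |x| < PI (this determines the coefficients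
   uniquely).  Real exponent via Rpower (x / sin x > 0 on that range). *)
Definition is_cosec_coeffs (rho : R) (c : nat -> R) : Prop :=
  forall x : R, - PI < x < PI -> x <> 0 ->
    infinite_sum (fun k => c k * x ^ (2 * k)) (Rpower (x / sin x) rho).

(* Main.v *)
Require Import Defs.
From Stdlib Require Import Reals Lra Lia.
From Coquelicot Require Import Coquelicot.
Open Scope R_scope.

Fixpoint ev (c : nat -> R) (j : nat) : R :=
  match j with
  | O => c O
  | S O => 0
  | S (S j) => ev (fun k => c (S k)) j
  end.

Lemma ev_even c n : ev c (2 * n) = c n.
Proof.
  revert c; induction n as [|n IH]; intro c; [reflexivity|].
  replace (2 * S n)%nat with (S (S (2 * n))) by lia. simpl ev. rewrite IH. reflexivity.
Qed.

Lemma ev_odd c n : ev c (2 * n + 1) = 0.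
Proof.
  revert c; induction n as [|n IH]; intro c; [reflexivity|].
  replace (2 * S n + 1)%nat with (S (S (2 * n + 1))) by lia. simpl ev. apply IH.
Qed.

Definition Dom (x : R) : Prop := - PI < x < PI /\ x <> 0.

Lemma ev_rep rho cc : is_cosec_coeffs rho cc ->
  forall x, Dom x -> ex_pseries (ev cc) x /\ PSeries (ev cc) x = Rpower (x / sin x) rho.
Proof.
  intros H x [Hx Hx0].
  specialize (H x Hx Hx0).
  apply is_series_Reals in H.
  assert (He : is_series (fun k => (fun k => ev cc (2 * k)) k * (x ^ 2) ^ k) (Rpower (x / sin x) rho)).
  { eapply is_series_ext; [|exact H]. intro k; cbv beta. rewrite ev_even, <- pow_mult. reflexivity. }
  assert (Ho : is_series (fun k => (fun k => ev cc (2 * k + 1)) k * (x ^ 2) ^ k) 0).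
  { assert (H0 := is_series_scal_l (K:=R_AbsRing) (V:=R_NormedModule) 0 _ _ He).
    eapply is_series_ext in H0. 2:{ intro j. reflexivity. }
    replace 0 with (scal (K:=R_AbsRing) (V:=R_NormedModule) 0 (Rpower (x / sin x) rho)) by (unfold scal; simpl; unfold mult; simpl; ring).
    eapply is_series_ext; [|exact H0]. intro k; cbv beta. rewrite ev_odd. unfold scal; simpl; unfold mult; simpl; ring. }
  assert (E1 : ex_pseries (fun k => ev cc (2 * k)) (x ^ 2)).
  { apply ex_pseries_R. eexists; exact He. }
  assert (E2 : ex_pseries (fun k => ev cc (2 * k + 1)) (x ^ 2)).
  { apply ex_pseries_R. eexists; exact Ho. }
  split. { apply ex_pseries_odd_even; assumption. }
  rewrite PSeries_odd_even by assumption.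
  unfold PSeries at 1 2. rewrite (is_series_unique _ _ He), (is_series_unique _ _ Ho). ring.
Qed.

Lemma radius_ge a : (forall x, Dom x -> ex_pseries a x) ->
  forall y, Rabs y < PI -> Rbar_lt (Rabs y) (CV_radius a).
Proof.
  intros H y Hy.
  set (x := (Rabs y + PI) / 2).
  assert (Hy0 := Rabs_pos y).
  assert (Dx : Dom x) by (unfold Dom, x; split; [split|]; lra).
  apply (Rbar_lt_le_trans _ (Rabs x)). { simpl. unfold x. rewrite (Rabs_right ((Rabs y + PI) / 2)). lra. assert (HP := PI_RGT_0). lra. }
  apply Rbar_not_lt_le. intro Hlt. apply (CV_disk_outside a x Hlt).
  apply ex_series_lim_0. apply ex_pseries_R. apply H, Dx.
Qed.

Lemma Dom_open x : Dom x -> locally x Dom.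
Proof.
  intros [[H1 H2] H3].
  assert (Hp : 0 < Rmin (Rabs x) (PI - Rabs x)).
  { apply Rmin_pos. apply Rabs_pos_lt, H3. unfold Rabs; destruct Rcase_abs; lra. }
  exists (mkposreal _ Hp). intros t Ht. simpl in Ht.
  unfold ball in Ht; simpl in Ht; unfold AbsRing_ball, abs, minus, plus, opp in Ht; simpl in Ht.
  assert (A1 := Rmin_l (Rabs x) (PI - Rabs x)). assert (A2 := Rmin_r (Rabs x) (PI - Rabs x)).
  unfold Dom. revert Ht A1 A2 H1 H2 H3. unfold Rabs; repeat destruct Rcase_abs; intros; try split; try split; try lra.
Qed.
Lemma is_derive_eq (f : R -> R) x l l' : is_derive f x l -> l = l' -> is_derive f x l'.
Proof. intros H E; subst; exact H. Qed.

Section D.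
Variable p : nat.
Definition uu t := t / sin t.
Definition ww t := (sin t - t * cos t) / (sin t)^2.
Definition yy t := uu t ^ S (S p).
Definition yy1 t := INR (S (S p)) * uu t ^ S p * ww t.
Definition yy2 t := INR (S (S p)) * (INR (S p) * uu t ^ p * ww t * ww t
   + uu t ^ S p * (t / sin t - 2 * cos t * (sin t - t * cos t) / (sin t)^3)).

Lemma d_uu t : sin t <> 0 -> is_derive uu t (ww t).
Proof. intro H. unfold uu, ww. auto_derive. auto. field. auto. Qed.

Lemma d_ww t : sin t <> 0 -> is_derive ww t (t / sin t - 2 * cos t * (sin t - t * cos t) / (sin t)^3).
Proof. intro H. unfold ww. auto_derive. auto. field. auto. Qed.

Lemma d_yy t : sin t <> 0 -> is_derive yy t (yy1 t).
Proof.
  intro H. unfold yy, yy1.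
  replace (INR (S (S p)) * uu t ^ S p * ww t) with (scal (ww t) (INR (S (S p)) * uu t ^ S p))
    by (unfold scal; simpl; unfold mult; simpl; ring).
  apply (is_derive_comp (fun v => v ^ S (S p)) uu). 2: apply d_uu, H.
  auto_derive. auto. simpl pred. destruct p; simpl; [ring|rewrite ?S_INR; ring].
Qed.

Lemma d_yy1 t : sin t <> 0 -> is_derive (yy1) t (yy2 t).
Proof.
  intro H.
  assert (H1 : is_derive (fun t => INR (S (S p)) * uu t ^ S p) t (scal (ww t) (INR (S (S p)) * (INR (S p) * uu t ^ p)))).
  { apply (is_derive_comp (fun v => INR (S (S p)) * v ^ S p) uu). 2: apply d_uu, H.
    auto_derive. auto. simpl pred. destruct p; simpl; [ring|rewrite ?S_INR; ring]. }
  assert (H2 := is_derive_mult _ _ _ _ _ H1 (d_ww t H) (fun n m => Rmult_comm n m)).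
  unfold yy1. eapply is_derive_eq. exact H2.
  unfold yy2, scal, plus, mult; simpl; unfold mult; simpl. ring.
Qed.
End D.

Lemma key p t : sin t <> 0 ->
  INR (S (S p)) * (INR (S (S p)) + 1) * uu t ^ (S (S p) + 2) =
  t^2 * yy2 p t - 2 * INR (S (S p)) * t * yy1 p t
  + (INR (S (S p)) * (INR (S (S p)) + 1) + INR (S (S p)) ^ 2 * t ^ 2) * yy p t.
Proof.
  intro H. unfold yy, yy1, yy2.
  replace (S (S p) + 2)%nat with (p + 4)%nat by lia.
  rewrite !pow_add. simpl (uu t ^ S _). rewrite !S_INR.
  set (U := uu t ^ p).
  assert (E : t^2 * ((INR p + 1 + 1) * ((INR p + 1) * U * ww t * ww t
     + uu t * U * (t / sin t - 2 * cos t * (sin t - t * cos t) / sin t ^ 3)))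
     - 2 * (INR p + 1 + 1) * t * ((INR p + 1 + 1) * (uu t * U) * ww t)
     + ((INR p + 1 + 1) * (INR p + 1 + 1 + 1) + (INR p + 1 + 1) ^ 2 * t ^ 2) * (uu t * (uu t * U))
     - (INR p + 1 + 1) * (INR p + 1 + 1 + 1) * (U * uu t ^ 4)
     = (INR p + 1 + 1) * (INR p + 1 + 1 + 1) * U * t ^ 4 * ((sin t)^2 + (cos t)^2 - 1) / (sin t)^4).
  { unfold uu, ww. field. exact H. }
  assert (E2 : (sin t)^2 + (cos t)^2 - 1 = 0).
  { assert (Q := sin2_cos2 t). unfold Rsqr in Q. simpl. lra. }
  rewrite E2 in E. lra.
Qed.
Lemma is_series_plus_R (u v : nat -> R) L1 L2 : is_series u L1 -> is_series v L2 ->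
  is_series (fun k => u k + v k) (L1 + L2).
Proof. intros H1 H2. apply (is_series_plus _ _ _ _ H1 H2). Qed.

Lemma is_series_scal_R (u : nat -> R) r L : is_series u L ->
  is_series (fun k => r * u k) (r * L).
Proof. intros H. apply (is_series_scal_l (K:=R_AbsRing) (V:=R_NormedModule) r _ _ H). Qed.

Lemma is_series_incr (d : nat -> R) x L : is_series (fun k => d k * x ^ k) L ->
  is_series (fun k => PS_incr_1 d k * x ^ k) (x * L).
Proof.
  intro H. apply is_pseries_R in H. apply is_pseries_incr_1 in H. apply is_pseries_R in H. exact H.
Qed.

Lemma cont_eq (f g : R -> R) r : 0 < r -> continuity_pt f 0 -> continuity_pt g 0 ->
  (forall t, Rabs t < r -> t <> 0 -> f t = g t) -> f 0 = g 0.
Proof.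
  intros Hr Hf Hg H.
  apply is_lim_continuity in Hf. apply is_lim_continuity in Hg.
  assert (Hf' : is_lim g 0 (f 0)).
  { eapply is_lim_ext_loc; [|exact Hf].
    exists (mkposreal r Hr). intros t Ht Ht0. apply H; auto.
    unfold ball in Ht; simpl in Ht; unfold AbsRing_ball, abs, minus, plus, opp in Ht; simpl in Ht.
    replace t with (t + - 0) by ring. exact Ht. }
  apply is_lim_unique in Hf'. apply is_lim_unique in Hg. rewrite Hf' in Hg. injection Hg. auto.
Qed.

Ltac rring := match goal with |- ?A = ?B => change (@eq R A B) end; ring.

Lemma Dom_abs x : Dom x -> Rabs x < PI.
Proof. intros [[H1 H2] _]. unfold Rabs; destruct Rcase_abs; lra. Qed.

Lemma Dom_sin x : Dom x -> sin x <> 0.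
Proof.
  intros [[H1 H2] H3]. destruct (Rlt_or_le 0 x).
  - assert (0 < sin x) by (apply sin_gt_0; lra). lra.
  - assert (sin x < 0) by (apply sin_lt_0_var; lra). lra.
Qed.

Lemma Dom_pos x : Dom x -> 0 < x / sin x.
Proof.
  intros [[H1 H2] H3]. destruct (Rlt_or_le 0 x).
  - assert (0 < sin x) by (apply sin_gt_0; lra). apply Rdiv_lt_0_compat; lra.
  - assert (sin x < 0) by (apply sin_lt_0_var; lra).
    replace (x / sin x) with ((- x) / (- sin x)) by (field; lra). apply Rdiv_lt_0_compat; lra.
Qed.

Lemma is_series_ext_eq (u v : nat -> R) L L' : (forall k, u k = v k) -> L = L' -> is_series u L -> is_series v L'.
Proof. intros H E Hs; subst. eapply is_series_ext; eauto. Qed.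

Lemma coeff_rel p (a b : nat -> R)
  (Ra : forall x, Dom x -> ex_pseries a x /\ PSeries a x = uu x ^ S (S p))
  (Rb : forall x, Dom x -> ex_pseries b x /\ PSeries b x = uu x ^ (S (S p) + 2))
  (j : nat) :
  INR (S (S p)) * (INR (S (S p)) + 1) * b j =
  INR j * (INR j - 1) * a j - 2 * INR (S (S p)) * INR j * a j
  + INR (S (S p)) * (INR (S (S p)) + 1) * a j + INR (S (S p)) ^ 2 * PS_incr_1 (PS_incr_1 a) j.
Proof.
  set (M := INR (S (S p))).
  assert (Rad_a := radius_ge a (fun x H => proj1 (Ra x H))).
  set (g := fun j => INR j * (INR j - 1) * a j - 2 * M * INR j * a j
      + M * (M + 1) * a j + M ^ 2 * PS_incr_1 (PS_incr_1 a) j).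
  set (h := fun j => M * (M + 1) * b j).
  assert (D1 : forall x, Dom x -> Derive (PSeries a) x = yy1 p x).
  { intros x Hx. rewrite (Derive_ext_loc _ (yy p)). apply is_derive_unique, d_yy, Dom_sin, Hx.
    eapply filter_imp; [|apply Dom_open, Hx]. intros t Ht. apply (proj2 (Ra t Ht)). }
  assert (D2 : forall x, Dom x -> Derive (Derive (PSeries a)) x = yy2 p x).
  { intros x Hx. rewrite (Derive_ext_loc _ (yy1 p)). apply is_derive_unique, d_yy1, Dom_sin, Hx.
    eapply filter_imp; [|apply Dom_open, Hx]. intros t Ht. apply D1, Ht. }
  assert (Dp2 : forall x, Dom x -> Derive (Derive (PSeries a)) x = PSeries (PS_derive (PS_derive a)) x).
  { intros x Hx. rewrite (Derive_ext_loc _ (PSeries (PS_derive a))).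
    apply Derive_PSeries. rewrite CV_radius_derive. apply Rad_a, Dom_abs, Hx.
    eapply filter_imp; [|apply Dom_open, Hx]. intros t Ht. apply Derive_PSeries, Rad_a, Dom_abs, Ht. }
  assert (Sg : forall x, Dom x -> is_series (fun j => g j * x ^ j)
      (x ^ 2 * yy2 p x - 2 * M * x * yy1 p x + (M * (M + 1) + M ^ 2 * x ^ 2) * yy p x)).
  { intros x Hx.
    assert (Hr := Rad_a x (Dom_abs x Hx)).
    assert (s2 : is_series (fun k => PS_derive (PS_derive a) k * x ^ k) (yy2 p x)).
    { apply is_pseries_R. rewrite <- D2, Dp2 by exact Hx. apply PSeries_correct.
      apply CV_radius_inside. rewrite !CV_radius_derive. exact Hr. }
    assert (s1 : is_series (fun k => PS_derive a k * x ^ k) (yy1 p x)).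
    { apply is_pseries_R. rewrite <- D1, Derive_PSeries by (exact Hx || exact Hr). apply PSeries_correct.
      apply CV_radius_inside. rewrite !CV_radius_derive. exact Hr. }
    assert (s0 : is_series (fun k => a k * x ^ k) (yy p x)).
    { apply is_pseries_R. unfold yy. rewrite <- (proj2 (Ra x Hx)). apply PSeries_correct.
      apply (proj1 (Ra x Hx)). }
    assert (A1 := is_series_incr _ _ _ (is_series_incr _ _ _ s2)).
    assert (A2 := is_series_scal_R _ (-2 * M) _ (is_series_incr _ _ _ s1)).
    assert (A3 := is_series_scal_R _ (M * (M + 1)) _ s0).
    assert (A4 := is_series_scal_R _ (M ^ 2) _ (is_series_incr _ _ _ (is_series_incr _ _ _ s0))).
    assert (A := is_series_plus_R _ _ _ _ (is_series_plus_R _ _ _ _ (is_series_plus_R _ _ _ _ A1 A2) A3) A4).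
    eapply is_series_ext_eq; [| |exact A].
    - intro k. unfold g. destruct k as [|[|k]].
      + simpl PS_incr_1; unfold zero; simpl. ring.
      + simpl PS_incr_1; unfold zero, PS_derive; simpl. ring.
      + cbn [PS_incr_1]. unfold PS_derive. rewrite !S_INR. cbn [pow]. ring.
    - rring. }
  assert (Sh : forall x, Dom x -> is_series (fun j => h j * x ^ j) (M * (M + 1) * uu x ^ (S (S p) + 2))).
  { intros x Hx. eapply is_series_ext_eq; [| |apply is_series_scal_R with (r := M * (M + 1)) (u := fun k => b k * x ^ k)].
    - intro k. unfold h. rring.
    - reflexivity.
    - apply is_pseries_R. rewrite <- (proj2 (Rb x Hx)). apply PSeries_correct. apply (proj1 (Rb x Hx)). }
  assert (Rad_g := radius_ge g (fun x H => proj2 (ex_pseries_R _ _) (ex_intro _ _ (Sg x H)))).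
  assert (Rad_h := radius_ge h (fun x H => proj2 (ex_pseries_R _ _) (ex_intro _ _ (Sh x H)))).
  assert (eqv : forall x, Dom x -> PSeries h x = PSeries g x).
  { intros x Hx. unfold PSeries. rewrite (is_series_unique _ _ (Sh x Hx)), (is_series_unique _ _ (Sg x Hx)).
    unfold M. apply key, Dom_sin, Hx. }
  assert (R0 : Rabs 0 < PI) by (rewrite Rabs_R0; apply PI_RGT_0).
  assert (HH : h j = g j).
  { apply PSeries_ext_recip.
    - rewrite <- Rabs_R0. apply Rad_h, R0.
    - rewrite <- Rabs_R0. apply Rad_g, R0.
    - exists (mkposreal PI PI_RGT_0). intros t Ht.
      assert (Ht' : Rabs t < PI).
      { unfold ball in Ht; simpl in Ht; unfold AbsRing_ball, abs, minus, plus, opp in Ht; simpl in Ht.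
        replace t with (t + - 0) by ring. exact Ht. }
      destruct (Req_dec t 0) as [->|Ht0].
      + apply (cont_eq _ _ PI PI_RGT_0).
        * apply PSeries_continuity. rewrite Rabs_R0. rewrite <- Rabs_R0. apply Rad_h, R0.
        * apply PSeries_continuity. rewrite Rabs_R0. rewrite <- Rabs_R0. apply Rad_g, R0.
        * intros s Hs Hs0. apply eqv. split; [|exact Hs0]. revert Hs; unfold Rabs; destruct Rcase_abs; intros; lra.
      + apply eqv. split; [|exact Ht0]. revert Ht'; unfold Rabs; destruct Rcase_abs; intros; lra. }
  exact HH.
Qed.

Theorem mainTheorem7 (c : R -> nat -> R)
  (Hc : forall rho : R, is_cosec_coeffs rho (c rho))
  (n k : nat) (hn : (1 <= n)%nat) :
  c (INR (2 * n + 2)) (S k) =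
    (2 * INR k + 2 - 2 * INR n) * (2 * INR k + 1 - 2 * INR n)
      / (2 * INR n * (2 * INR n + 1)) * c (INR (2 * n)) (S k)
    + 2 * INR n / (2 * INR n + 1) * c (INR (2 * n)) k.
Proof.
  destruct n as [|n']; [lia|].
  set (p := (2 * n')%nat).
  assert (E1 : (2 * S n')%nat = S (S p)) by (unfold p; lia).
  assert (E2 : (2 * S n' + 2)%nat = (S (S p) + 2)%nat) by (unfold p; lia).
  assert (Ra : forall x, Dom x -> ex_pseries (ev (c (INR (2 * S n')))) x /\
               PSeries (ev (c (INR (2 * S n')))) x = uu x ^ S (S p)).
  { intros x Hx. destruct (ev_rep _ _ (Hc (INR (2 * S n'))) x Hx) as [H1 H2].
    split; [exact H1|]. rewrite H2, Rpower_pow by (apply Dom_pos, Hx). rewrite E1. reflexivity. }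
  assert (Rb : forall x, Dom x -> ex_pseries (ev (c (INR (2 * S n' + 2)))) x /\
               PSeries (ev (c (INR (2 * S n' + 2)))) x = uu x ^ (S (S p) + 2)).
  { intros x Hx. destruct (ev_rep _ _ (Hc (INR (2 * S n' + 2))) x Hx) as [H1 H2].
    split; [exact H1|]. rewrite H2, Rpower_pow by (apply Dom_pos, Hx). rewrite E2. reflexivity. }
  assert (H := coeff_rel p _ _ Ra Rb (2 * S k)).
  replace (PS_incr_1 (PS_incr_1 (ev (c (INR (2 * S n'))))) (2 * S k)) with (ev (c (INR (2 * S n'))) (2 * k)) in H
    by (replace (2 * S k)%nat with (S (S (2 * k))) by lia; reflexivity).
  rewrite !ev_even in H.
  rewrite <- E1 in H.
  assert (Hn : 0 < INR (S n')) by (apply lt_0_INR; lia).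
  set (A := c (INR (2 * S n' + 2)) (S k)) in *.
  set (B := c (INR (2 * S n')) (S k)) in *.
  set (C := c (INR (2 * S n')) k) in *.
  replace (INR (2 * S k)) with (2 * INR k + 2) in H
    by (rewrite mult_INR, (S_INR k); simpl (INR 2); ring).
  replace (INR (2 * S n')) with (2 * INR (S n')) in H by (rewrite mult_INR; simpl (INR 2); ring).
  set (N := INR (S n')) in *.
  assert (HA : A = ((2 * INR k + 2) * (2 * INR k + 2 - 1) * B - 2 * (2 * N) * (2 * INR k + 2) * B
      + 2 * N * (2 * N + 1) * B + (2 * N) ^ 2 * C) / (2 * N * (2 * N + 1))).
  { rewrite <- H. field. lra. }
  rewrite HA. field. lra.
Qed.
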